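(* Let $n\ge 4$ and let $P_n$ be the path on $n$ vertices with end vertices $u$ and $v$. Then there exists a permutation $\sigma$ of $V(P_n)$ such that: (1) $\sigma$ is a 2-placement of $P_n$; (2) $\sigma(P_n)\subseteq P_n^4$; (3) $dist(u,\sigma(u))=1$ and $dist(v,\sigma(v))\le 1$; (4) every cycle of $\sigma$ has length at most $4$.
   Context: All graphs are finite, simple and undirected; $dist$ denotes the distance in $P_n$. For a graph $G$, a permutation $\sigma$ of $V(G)$ is a 2-placement of $G$ if for every edge $ab\in E(G)$, $\sigma(a)\sigma(b)\notin E(G)$. $G^k$ denotes the $k$-th power of $G$ (same vertex set, distinct vertices adjacent iff their distance in $G$ is at most $k$); $\sigma(G)\subseteq G^k$ means that for every edge $ab$ of $G$, $dist_G(\sigma(a),\sigma(b))\le k$. The cycles of $\sigma$ are those of its disjoint cycle decomposition, fixed points counting as cycles of length $1$. *)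

(* Defs.v *)
From mathcomp Require Import all_boot all_fingroup.
Set Implicit Arguments. Unset Strict Implicit. Unset Printing Implicit Defensive.

Definition pdist (n : nat) (i j : 'I_n) : nat := maxn i j - minn i j.
Definition path_edge (n : nat) (i j : 'I_n) : bool := pdist i j == 1.

Definition two_placement (n : nat) (s : {perm 'I_n}) : Prop :=
  forall a b : 'I_n, path_edge a b -> ~~ path_edge (s a) (s b).

(* sigma(P_n) is a subgraph of P_n^k. *)
Definition in_power (n k : nat) (s : {perm 'I_n}) : Prop :=
  forall a b : 'I_n, path_edge a b -> pdist (s a) (s b) <= k.

Definition cycles_bounded (n m : nat) (s : {perm 'I_n}) : Prop :=
  forall x : 'I_n, #|porbit s x| <= m.

(* Main.v *)
Require Import Defs.
From mathcomp Require Import all_boot all_fingroup.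
From mathcomp Require Import zify.

Definition pp (c : nat) : nat :=
  match c with 0 => 1 | 1 => 3 | 2 => 0 | _ => 2 end.
Definition qq (r j : nat) : nat :=
  nth 0 (match r with 0 => [:: 1; 3; 0; 2] | 1 => [:: 1; 3; 0; 2; 4]
         | 2 => [:: 1; 4; 2; 0; 3; 5] | _ => [:: 1; 3; 6; 4; 0; 2; 5] end) j.
Definition gg (m r i : nat) : nat :=
  if i < m then 4 * (i %/ 4) + pp (i %% 4) else m + qq r (i - m).

Lemma L1 m r a c : 4 * a + 4 <= m -> c < 4 -> gg m r (4 * a + c) = 4 * a + pp c.
Proof.
move=> Ha Hc; rewrite /gg ifT; last by lia.
have -> : (4 * a + c) %/ 4 = a by lia.
have -> : (4 * a + c) %% 4 = c by lia.
by [].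
Qed.

Lemma L2 m r j : j < 4 + r -> gg m r (m + j) = m + qq r j.
Proof. by move=> _; rewrite /gg ifF ?addKn //; lia. Qed.

Lemma decomp m r i : m %% 4 = 0 -> i < m + (4 + r) ->
  (exists a c, [/\ 4 * a + 4 <= m, c < 4 & i = 4 * a + c]) \/
  (exists j, j < 4 + r /\ i = m + j).
Proof.
move=> Hm Hi; case: (ltnP i m) => H.
  by left; exists (i %/ 4), (i %% 4); split; lia.
by right; exists (i - m); split; lia.
Qed.

Lemma gg_lt m r i : m %% 4 = 0 -> r < 4 -> i < m + (4 + r) -> gg m r i < m + (4 + r).
Proof.
move=> Hm Hr Hi; case: (decomp m r i Hm Hi) => [[a [c [Ha Hc ->]]]|[j [Hj ->]]].
  rewrite L1 //; case: c Hc => [|[|[|[|c]]]] //= _; lia.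
rewrite L2 //; case: r Hr Hj Hi => [|[|[|[|r]]]] // _;
  case: j => [|[|[|[|[|[|[|j]]]]]]] //= _ _; rewrite /qq /=; lia.
Qed.

Lemma gg_cyc m r i : m %% 4 = 0 -> r < 4 -> i < m + (4 + r) ->
  exists k, [/\ 0 < k, k <= 4 & iter k (gg m r) i = i].
Proof.
move=> Hm Hr Hi; case: (decomp m r i Hm Hi) => [[a [c [Ha Hc ->]]]|[j [Hj ->]]].
  exists 4; split => //=.
  by case: c Hc => [|[|[|[|c]]]] //= _; rewrite !(L1 m r a _ Ha).
case: r Hr Hj Hi => [|[|[|[|r]]]] // _;
  case: j => [|[|[|[|[|[|[|j]]]]]]] //= _ _;
  first [ exists 1; split => //=; by do ![rewrite L2 // /qq /=]
        | exists 2; split => //=; by do ![rewrite L2 // /qq /=]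
        | exists 3; split => //=; by do ![rewrite L2 // /qq /=]
        | exists 4; split => //=; by do ![rewrite L2 // /qq /=] ].
Qed.

Lemma gg_edge m r i : m %% 4 = 0 -> r < 4 -> i.+1 < m + (4 + r) ->
  let d := maxn (gg m r i) (gg m r i.+1) - minn (gg m r i) (gg m r i.+1) in
  2 <= d <= 4.
Proof.
move=> Hm Hr Hi /=; have Hi' : i < m + (4 + r) by lia.
case: (decomp m r i Hm Hi') Hi => [[a [c [Ha Hc ->]]]|[j [Hj ->]]] Hi; clear Hi'.
  case: c Hc Hi => [|[|[|[|c]]]] // _ Hi.
  - by rewrite -addnS !L1 //=; lia.
  - by rewrite -addnS !L1 //=; lia.
  - by rewrite -addnS !L1 //=; lia.
  rewrite L1 //=.
  case: (leqP (4 * a + 8) m) => H.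
    have -> : (4 * a + 3).+1 = 4 * (a.+1) + 0 by lia.
    rewrite L1 /=; lia.
  have Em : m = 4 * a + 4 by lia.
  have -> : (4 * a + 3).+1 = m + 0 by lia.
  rewrite L2 /qq; last by lia.
  case: r Hr Hi => [|[|[|[|r]]]] //= *; lia.
rewrite -addnS.
case: r Hr Hj Hi => [|[|[|[|r]]]] // _;
  case: j => [|[|[|[|[|[|[|j]]]]]]] //= _ Hi; try lia;
  rewrite !L2 /qq //=; lia.
Qed.

Lemma gg_first m r : gg m r 0 = 1.
Proof.
by case: m => [|m]; rewrite /gg //=; case: r => [|[|[|r]]].
Qed.

Lemma gg_last m r : r < 4 ->
  let x := gg m r (m + (3 + r)) in maxn x (m + (3 + r)) - minn x (m + (3 + r)) <= 1.
Proof.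
move=> Hr /=; rewrite L2; last by lia.
case: r Hr => [|[|[|[|r]]]] //= _; rewrite /qq /=; lia.
Qed.

Lemma iter_mul (T : Type) (f : T -> T) k q x : iter k f x = x -> iter (q * k) f x = x.
Proof. by move=> H; elim: q => [|q IH] //=; rewrite mulSn iterD IH H. Qed.

Lemma gg_12 m r i : m %% 4 = 0 -> r < 4 -> i < m + (4 + r) -> iter 12 (gg m r) i = i.
Proof.
move=> Hm Hr Hi; have [k [Hk0 Hk4 Hk]] := gg_cyc m r i Hm Hr Hi.
case: k Hk0 Hk4 Hk => [|[|[|[|[|k]]]]] // _ _ H.
- exact: (@iter_mul _ _ _ 12 _ H).
- exact: (@iter_mul _ _ _ 6 _ H).
- exact: (@iter_mul _ _ _ 4 _ H).
- exact: (@iter_mul _ _ _ 3 _ H).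
Qed.

Lemma porbit_le (T : finType) (s : {perm T}) x k : 0 < k -> (s ^+ k)%g x = x ->
  #|porbit s x| <= k.
Proof.
move=> Hk; rewrite permX => H.
apply: leq_trans (_ : #|traject s x k| <= k).
  apply: subset_leq_card; apply/subsetP => y /porbitP [i ->].
  rewrite permX; apply/trajectP; exists (i %% k); first by rewrite ltn_mod.
  by rewrite {1}(divn_eq i k) addnC iterD (@iter_mul _ _ _ _ _ H).
by apply: leq_trans (card_size _) _; rewrite size_traject.
Qed.

Lemma gg_edge2 m r i j : m %% 4 = 0 -> r < 4 -> i < m + (4 + r) -> j < m + (4 + r) ->
  maxn i j - minn i j = 1 ->
  2 <= maxn (gg m r i) (gg m r j) - minn (gg m r i) (gg m r j) <= 4.
Proof.
move=> Hm Hr Hi Hj Hij; case: (leqP i j) => h.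
  have E : j = i.+1 by lia.
  by rewrite E; apply: (gg_edge m r i Hm Hr); rewrite -E.
have E : i = j.+1 by lia.
by rewrite E maxnC minnC; apply: (gg_edge m r j Hm Hr); rewrite -E.
Qed.

Theorem theorem1p6 (n : nat) (hn : 4 <= n) (u v : 'I_n)
    (hu : val u = 0) (hv : val v = n.-1) :
  exists s : {perm 'I_n},
    [/\ two_placement s,
        in_power 4 s,
        pdist u (s u) = 1 /\ pdist v (s v) <= 1
      & cycles_bounded 4 s].
Proof.
pose r := n %% 4; pose m := n - (4 + r).
have Hr : r < 4 by rewrite /r ltn_mod.
have Hm : m %% 4 = 0 by rewrite /m /r; lia.
have En : n = m + (4 + r) by rewrite /m /r; lia.
have Hlt2 : forall i : 'I_n, val i < m + (4 + r) by move=> i; rewrite -En; apply: ltn_ord.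
have Hlt : forall i : 'I_n, gg m r i < n.
  by move=> i; have := gg_lt m r i Hm Hr (Hlt2 i); rewrite -En.
pose f (i : 'I_n) : 'I_n := Ordinal (Hlt i).
have H12 : forall i : 'I_n, iter 12 (gg m r) i = i.
  by move=> i; exact: (gg_12 m r i Hm Hr (Hlt2 i)).
have finj : injective f.
  move=> x y /(congr1 val) /= E; apply: val_inj => /=.
  by rewrite -(H12 x) -(H12 y) !iterSr E.
pose s := perm finj.
have sE : forall i, val (s i) = gg m r (val i) by move=> i; rewrite permE.
have sX : forall k i, val ((s ^+ k)%g i) = iter k (gg m r) (val i).
  move=> k i; rewrite permX; elim: k => [|k IH] //=.
  by rewrite sE IH.
exists s; split.
- move=> a b; rewrite /path_edge /pdist => /eqP Hab; rewrite !sE.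
  have := gg_edge2 m r a b Hm Hr (Hlt2 a) (Hlt2 b) Hab.
  move=> H; apply/eqP => H'; rewrite H' in H; done.
- move=> a b; rewrite /path_edge /pdist => /eqP Hab; rewrite !sE.
  have := gg_edge2 m r a b Hm Hr (Hlt2 a) (Hlt2 b) Hab.
  by case/andP.
- split.
    by rewrite /pdist sE !hu gg_first.
  rewrite /pdist sE !hv.
  have -> : n.-1 = m + (3 + r) by lia.
  rewrite maxnC minnC; exact: (gg_last m r Hr).
- move=> x; have [k [Hk0 Hk4 Hk]] := gg_cyc m r x Hm Hr (Hlt2 x).
  apply: leq_trans Hk4; apply: porbit_le => //.
  by apply: val_inj; rewrite sX.
Qed.
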